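(* Let $q,z$ be complex numbers with $|q|<1$ and $|z|<1$, with $-zq^{j}\neq 1$ for all $j\ge1$. Let $\theta(z;q)=\sum_{n=0}^\infty(-1)^nq^{n(n-1)/2}z^{n}$ be the partial theta function. Then $$\frac{(zq;q)_\infty}{(-zq;q)_\infty}+\sum_{n=0}^{\infty}\frac{(-1,z;q)_n}{(q,-zq;q)_n}(-z)^nq^{n^2+n}=\sum_{n=0}^{\infty}\frac{(-1,z;q)_n}{(q,-zq;q)_n}\big(1+q^n+zq^{n}-zq^{2n}\big)(-z)^nq^{n^2}\,\theta(z^2q^{2n+1};q^2).$$
   Context: $(x;q)_\infty=\prod_{j\ge0}(1-xq^j)$, $(x;q)_n=\prod_{j=0}^{n-1}(1-xq^j)$, and $(x_1,x_2;q)_n=(x_1;q)_n(x_2;q)_n$. *)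

(* Defs.v *)
From Stdlib Require Import Reals.
From Coquelicot Require Import Coquelicot.

Open Scope C_scope.

Fixpoint qpoch (x q : C) (n : nat) : C :=
  match n with
  | O => 1
  | S m => qpoch x q m * (1 - x * q ^ m)
  end.

Definition is_qpoch_inf (x q P : C) : Prop :=
  filterlim (qpoch x q) eventually (locally P).

Definition ptheta_term (z q : C) (n : nat) : C :=
  (-1) ^ n * q ^ (Nat.div (n * (n - 1)) 2) * z ^ n.

Definition is_ptheta (z q t : C) : Prop :=
  is_series (ptheta_term z q) t.

Definition coef (z q : C) (n : nat) : C :=
  qpoch (-1) q n * qpoch z q n / (qpoch q q n * qpoch (- z * q) q n).

(* Main.v *)
Require Import Defs.
From Stdlib Require Import Reals Lra Lia ClassicalEpsilon.
From Coquelicot Require Import Coquelicot.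
Open Scope C_scope.

Lemma Cmod_sub_le (a b : C) : (Cmod (a - b) <= Cmod a + Cmod b)%R.
Proof. unfold Cminus. rewrite <- (Cmod_opp b). apply Cmod_triangle. Qed.

Lemma limC_iff (u : nat -> C) (l : C) :
  filterlim u eventually (locally l) <-> is_lim_seq (fun n => Cmod (u n - l)) 0%R.
Proof.
  split.
  - intros H. apply is_lim_seq_spec. intros eps.
    apply (filterlim_locally_ball_norm (K:=C_AbsRing) (U:=C_NormedModule)) with (eps:=eps) in H.
    eapply filter_imp; [| exact H]. intros n Hn. simpl.
    rewrite Rminus_0_r, Rabs_pos_eq by apply Cmod_ge_0. exact Hn.
  - intros H. apply (filterlim_locally_ball_norm (K:=C_AbsRing) (U:=C_NormedModule)).
    intros eps. apply is_lim_seq_spec in H. specialize (H eps).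
    eapply filter_imp; [| exact H]. intros n Hn. simpl in Hn.
    rewrite Rminus_0_r, Rabs_pos_eq in Hn by apply Cmod_ge_0. unfold ball_norm.
    exact Hn.
Qed.

Lemma limC_sq (u : nat -> C) (l : C) (b : nat -> R) :
  (forall n, (Cmod (u n - l) <= b n)%R) -> is_lim_seq b 0%R ->
  filterlim u eventually (locally l).
Proof.
  intros Hb Hl. apply limC_iff.
  apply is_lim_seq_le_le with (u := fun _ => 0%R) (w := b).
  - intros n; split; [apply Cmod_ge_0 | apply Hb].
  - apply is_lim_seq_const.
  - exact Hl.
Qed.

Lemma limC_bound (u : nat -> C) (l c : C) (M : R) :
  filterlim u eventually (locally l) -> (forall n, (Cmod (u n - c) <= M)%R) ->
  (Cmod (l - c) <= M)%R.
Proof.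
  intros Hl Hb. apply limC_iff in Hl.
  assert (H : Rbar_le (Cmod (l - c)) (M + 0)%R).
  { apply is_lim_seq_le with (u := fun _ => Cmod (l - c)) (v := fun n => (M + Cmod (u n - l))%R).
    - intros n. replace (l - c) with ((u n - c) - (u n - l)) by ring.
      eapply Rle_trans; [apply Cmod_sub_le|]. specialize (Hb n). lra.
    - apply is_lim_seq_const.
    - apply is_lim_seq_plus'; [apply is_lim_seq_const | exact Hl]. }
  simpl in H. lra.
Qed.

Lemma limC_unique (u : nat -> C) (l1 l2 : C) :
  filterlim u eventually (locally l1) -> filterlim u eventually (locally l2) -> l1 = l2.
Proof.
  intros H1 H2. apply limC_iff in H1. apply limC_iff in H2.
  assert (H : Rbar_le (Cmod (l1 - l2)) (0 + 0)%R).
  { apply is_lim_seq_le with (u := fun _ => Cmod (l1 - l2)) (v := fun n => (Cmod (u n - l1) + Cmod (u n - l2))%R).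
    - intros n. replace (l1 - l2) with ((u n - l2) - (u n - l1)) by ring.
      eapply Rle_trans; [apply Cmod_sub_le|]. lra.
    - apply is_lim_seq_const.
    - apply is_lim_seq_plus'; assumption. }
  simpl in H. assert (Cmod (l1 - l2) = 0%R) by (pose proof (Cmod_ge_0 (l1 - l2)); lra).
  apply Cmod_eq_0 in H0. replace l1 with ((l1 - l2) + l2) by ring. rewrite H0. ring.
Qed.

Lemma qpoch_S x q n : qpoch x q (S n) = qpoch x q n * (1 - x * q ^ n).
Proof. reflexivity. Qed.

Lemma qpoch_shift x q n : qpoch x q (S n) = (1 - x) * qpoch (x * q) q n.
Proof.
  induction n as [|n IH].
  - simpl. ring.
  - rewrite qpoch_S, IH, qpoch_S. rewrite Cpow_S. ring.
Qed.

Lemma real_low (a r : R) : (0 <= a)%R -> (a <= r)%R -> (r < 1)%R ->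
  (exp (- (a / (1 - r))) <= 1 - a)%R.
Proof.
  intros Ha Har Hr.
  set (y := (a / (1 - r))%R).
  assert (Hy : (y * (1 - r) = a)%R) by (unfold y; field; lra).
  assert (Hy0 : (0 <= y)%R) by (unfold y; apply Rdiv_le_0_compat; lra).
  pose proof (exp_ineq1_le y) as He.
  pose proof (exp_pos y) as Hp.
  rewrite exp_Ropp.
  apply (Rmult_le_reg_r (exp y)); [exact Hp|].
  rewrite Rinv_l by lra.
  apply Rle_trans with ((1 - a) * (1 + y))%R.
  - nra.
  - apply Rmult_le_compat_l; lra.
Qed.

Lemma pow_le1 (r : R) (n : nat) : (0 <= r <= 1)%R -> (r ^ n <= 1)%R.
Proof. intros H. rewrite <- (pow1 n). apply pow_incr. exact H. Qed.

Lemma Cmod_1_sub_le (w : C) : (Cmod (1 - w) <= 1 + Cmod w)%R.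
Proof. eapply Rle_trans; [apply Cmod_sub_le|]. rewrite Cmod_1. lra. Qed.

Lemma Cmod_1_sub_ge (w : C) : (1 - Cmod w <= Cmod (1 - w))%R.
Proof.
  assert (H : (Cmod 1 <= Cmod (1 - w) + Cmod w)%R).
  { replace (RtoC 1) with ((1 - w) + w) at 1 by ring. apply Cmod_triangle. }
  rewrite Cmod_1 in H. lra.
Qed.

Lemma qpoch_up (x q : C) (n : nat) : (Cmod q < 1)%R ->
  (Cmod (qpoch x q n) <= exp (Cmod x * (1 - Cmod q ^ n) / (1 - Cmod q)))%R.
Proof.
  intros Hq. induction n as [|n IH].
  - simpl. rewrite Cmod_1. replace (Cmod x * (1 - 1) / (1 - Cmod q))%R with 0%R by (field; lra).
    rewrite exp_0. lra.
  - rewrite qpoch_S, Cmod_mult.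
    replace (Cmod x * (1 - Cmod q ^ S n) / (1 - Cmod q))%R
      with (Cmod x * (1 - Cmod q ^ n) / (1 - Cmod q) + Cmod x * Cmod q ^ n)%R
      by (simpl; field; lra).
    rewrite exp_plus.
    apply Rmult_le_compat; [apply Cmod_ge_0 | apply Cmod_ge_0 | exact IH |].
    eapply Rle_trans; [apply Cmod_1_sub_le|].
    rewrite Cmod_mult, Cmod_pow. apply exp_ineq1_le.
Qed.

Lemma qpoch_low (x q : C) (n : nat) : (Cmod q < 1)%R -> (Cmod x <= Cmod q)%R ->
  (exp (- (Cmod q * (1 - Cmod q ^ n) / ((1 - Cmod q) * (1 - Cmod q)))) <= Cmod (qpoch x q n))%R.
Proof.
  intros Hq Hx. set (r := Cmod q) in *. assert (Hr0 : (0 <= r)%R) by apply Cmod_ge_0.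
  induction n as [|n IH].
  - simpl. rewrite Cmod_1. replace (r * (1 - 1) / ((1 - r) * (1 - r)))%R with 0%R by (field; lra).
    rewrite Ropp_0, exp_0. lra.
  - rewrite qpoch_S, Cmod_mult.
    assert (Hrn : (0 <= r ^ n <= 1)%R).
    { split; [apply pow_le; lra | apply pow_le1; lra]. }
    replace (- (r * (1 - r ^ S n) / ((1 - r) * (1 - r))))%R
      with (- (r * (1 - r ^ n) / ((1 - r) * (1 - r))) + - (r ^ S n / (1 - r)))%R
      by (simpl; field; lra).
    rewrite exp_plus.
    apply Rmult_le_compat; [left; apply exp_pos | left; apply exp_pos | exact IH |].
    eapply Rle_trans; [| apply Cmod_1_sub_ge].
    rewrite Cmod_mult, Cmod_pow. fold r.
    eapply Rle_trans; [apply real_low with (r := r)|].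
    + apply pow_le; lra.
    + simpl. nra.
    + exact Hq.
    + simpl. assert (Cmod x * r ^ n <= r * r ^ n)%R by (apply Rmult_le_compat_r; lra). lra.
Qed.

Lemma exp_le' (a b : R) : (a <= b)%R -> (exp a <= exp b)%R.
Proof. intros H. destruct (Rle_lt_or_eq_dec _ _ H) as [H1|H1]; [left; apply exp_increasing; exact H1 | subst; lra]. Qed.

Definition Kl (q : C) : R := exp (- (Cmod q / ((1 - Cmod q) * (1 - Cmod q)))).
Definition Ku (q : C) : R := exp (1 / (1 - Cmod q)).

Lemma Kl_pos q : (0 < Kl q)%R. Proof. apply exp_pos. Qed.
Lemma Ku_pos q : (0 < Ku q)%R. Proof. apply exp_pos. Qed.

Lemma qpoch_lowK (x q : C) (n : nat) : (Cmod q < 1)%R -> (Cmod x <= Cmod q)%R ->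
  (Kl q <= Cmod (qpoch x q n))%R.
Proof.
  intros Hq Hx. eapply Rle_trans; [| apply qpoch_low; assumption].
  unfold Kl. apply exp_le'. apply Ropp_le_contravar.
  pose proof (Cmod_ge_0 q).
  assert (0 <= Cmod q ^ n)%R by (apply pow_le; lra).
  unfold Rdiv. apply Rmult_le_compat_r.
  - left. apply Rinv_0_lt_compat. nra.
  - nra.
Qed.

Lemma qpoch_nz (x q : C) (n : nat) : (Cmod q < 1)%R -> (Cmod x <= Cmod q)%R -> qpoch x q n <> 0.
Proof.
  intros Hq Hx. apply Cmod_gt_0. eapply Rlt_le_trans; [apply Kl_pos | apply qpoch_lowK; assumption].
Qed.

Lemma qpoch_upK (x q : C) (n : nat) : (Cmod q < 1)%R -> (Cmod x <= 1)%R ->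
  (Cmod (qpoch x q n) <= Ku q)%R.
Proof.
  intros Hq Hx. eapply Rle_trans; [apply qpoch_up; assumption|].
  unfold Ku. apply exp_le'.
  pose proof (Cmod_ge_0 q). pose proof (Cmod_ge_0 x).
  assert (0 <= Cmod q ^ n)%R by (apply pow_le; lra).
  unfold Rdiv. apply Rmult_le_compat_r.
  - left. apply Rinv_0_lt_compat. lra.
  - nra.
Qed.

Definition CB (q : C) : R := (Ku q * Ku q / (Kl q * Kl q))%R.

Lemma CB_pos q : (0 < CB q)%R.
Proof. unfold CB. pose proof (Kl_pos q). pose proof (Ku_pos q). apply Rdiv_lt_0_compat; nra. Qed.

Lemma coef_bound (w q : C) (n : nat) : (Cmod q < 1)%R -> (Cmod w <= 1)%R ->
  (Cmod (coef w q n) <= CB q)%R.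
Proof.
  intros Hq Hw. unfold coef.
  assert (Hq0 : (0 <= Cmod q)%R) by apply Cmod_ge_0.
  assert (H1 : qpoch q q n <> 0) by (apply qpoch_nz; lra).
  assert (H2x : (Cmod (- w * q) <= Cmod q)%R).
  { rewrite Cmod_mult, Cmod_opp. nra. }
  assert (H2 : qpoch (- w * q) q n <> 0) by (apply qpoch_nz; assumption).
  rewrite Cmod_div by (apply Cmult_neq_0; assumption).
  rewrite !Cmod_mult.
  unfold CB. unfold Rdiv.
  pose proof (Kl_pos q). pose proof (Ku_pos q).
  apply Rmult_le_compat.
  - apply Rmult_le_pos; apply Cmod_ge_0.
  - left. apply Rinv_0_lt_compat. apply Rmult_lt_0_compat; apply Cmod_gt_0; assumption.
  - apply Rmult_le_compat; try apply Cmod_ge_0; apply qpoch_upK; auto.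
    rewrite Cmod_R. unfold Rabs. destruct (Rcase_abs (-1)); lra.
  - apply Rinv_le_contravar; [nra|].
    apply Rmult_le_compat; try lra; apply qpoch_lowK; auto; lra.
Qed.

Lemma series_ex_geom (a : nat -> C) (B r : R) : (0 <= r < 1)%R ->
  (forall n, (Cmod (a n) <= B * r ^ n)%R) -> exists l : C, is_series a l.
Proof.
  intros Hr Hb.
  assert (H : ex_series a).
  { apply (ex_series_le (K:=C_AbsRing) (V:=C_CompleteNormedModule)) with (b := fun n => (B * r ^ n)%R).
    - intros n. apply Hb.
    - exists (B * / (1 - r))%R. apply (is_series_scal_l (K:=R_AbsRing) (V:=R_NormedModule)). apply is_series_geom. rewrite Rabs_pos_eq; lra. }
  destruct H as [l Hl]. exists l. exact Hl.
Qed.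

Lemma sumC_S (a : nat -> C) N : sum_n a (S N) = sum_n a N + a (S N).
Proof. rewrite sum_Sn. reflexivity. Qed.

Lemma sumC_O (a : nat -> C) : sum_n a 0 = a 0%nat.
Proof. rewrite sum_O. reflexivity. Qed.

Lemma psum_bound (a : nat -> C) (B r : R) : (0 <= r < 1)%R -> (0 <= B)%R ->
  (forall n, (Cmod (a (S n)) <= B * r ^ (S n))%R) ->
  forall N, (Cmod (sum_n a N - a 0%nat) <= B * (r - r ^ (S N)) / (1 - r))%R.
Proof.
  intros Hr HB Ha N. induction N as [|N IH].
  - rewrite sumC_O. replace (a 0%nat - a 0%nat) with (RtoC 0) by ring. rewrite Cmod_0.
    simpl. replace (B * (r - r * 1) / (1 - r))%R with 0%R by (field; lra). lra.
  - rewrite sumC_S. replace (sum_n a N + a (S N) - a 0%nat) with ((sum_n a N - a 0%nat) + a (S N)) by ring.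
    eapply Rle_trans; [apply Cmod_triangle|].
    replace (B * (r - r ^ S (S N)) / (1 - r))%R with (B * (r - r ^ S N) / (1 - r) + B * r ^ S N)%R
      by (simpl; field; lra).
    specialize (Ha N). lra.
Qed.

Lemma psum_bound' (a : nat -> C) (B r : R) : (0 <= r < 1)%R -> (0 <= B)%R ->
  (forall n, (Cmod (a (S n)) <= B * r ^ (S n))%R) ->
  forall N, (Cmod (sum_n a N - a 0%nat) <= B * r / (1 - r))%R.
Proof.
  intros Hr HB Ha N. eapply Rle_trans; [apply (psum_bound a B r Hr HB Ha N)|].
  unfold Rdiv. apply Rmult_le_compat_r; [left; apply Rinv_0_lt_compat; lra|].
  apply Rmult_le_compat_l; [lra|]. assert (0 <= r ^ S N)%R by (apply pow_le; lra). lra.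
Qed.

Lemma series_bound (a : nat -> C) (l : C) (B r : R) : (0 <= r < 1)%R -> (0 <= B)%R ->
  is_series a l -> (forall n, (Cmod (a (S n)) <= B * r ^ (S n))%R) ->
  (Cmod (l - a 0%nat) <= B * r / (1 - r))%R.
Proof.
  intros Hr HB Hl Ha. apply limC_bound with (u := sum_n a); [exact Hl|].
  apply psum_bound'; assumption.
Qed.

Lemma lim_geom (c r : R) : (0 <= r < 1)%R -> is_lim_seq (fun n => (c * r ^ n)%R) 0%R.
Proof.
  intros Hr. pose proof (is_lim_seq_scal_l _ c _ (is_lim_seq_geom r ltac:(rewrite Rabs_pos_eq; lra))) as H.
  simpl in H. rewrite Rmult_0_r in H. exact H.
Qed.

Lemma one_sub_nz (a : C) : (Cmod a < 1)%R -> 1 - a <> 0.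
Proof.
  intros H E. pose proof (Cmod_1_sub_ge a) as H1. rewrite E, Cmod_0 in H1. lra.
Qed.

Lemma one_add_nz (a : C) : (Cmod a < 1)%R -> 1 + a <> 0.
Proof.
  intros H. replace (1 + a) with (1 - - a) by ring. apply one_sub_nz. rewrite Cmod_opp. exact H.
Qed.

Lemma Cpow_le1 (q : C) (k : nat) : (Cmod q <= 1)%R -> (Cmod (q ^ k) <= 1)%R.
Proof. intros H. rewrite Cmod_pow. apply pow_le1. split; [apply Cmod_ge_0 | exact H]. Qed.

Lemma Cmod_pow_lt1 (q : C) (k : nat) : (Cmod q < 1)%R -> (Cmod (q ^ k) <= 1)%R.
Proof. intros H. apply Cpow_le1. lra. Qed.

Definition tt (q w : C) (n : nat) : C :=
  coef w q n * (- w) ^ n * q ^ (n * n) * (1 - w * q ^ (2 * n)) / (1 - w).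

Definition WW (q w : C) (n : nat) : C :=
  (1 + w * q) * (1 - q ^ n) * coef w q n * (- w) ^ n * q ^ (n * n) / (1 - w).

Lemma Cpow_2n (q : C) (n : nat) : q ^ (2 * n) = q ^ n * q ^ n.
Proof. replace (2 * n)%nat with (n + n)%nat by lia. apply Cpow_add_r. Qed.

Lemma Cpow_sq_S (q : C) (n : nat) : q ^ (S n * S n) = q ^ (n * n) * q ^ n * q ^ n * q.
Proof.
  replace (S n * S n)%nat with (S (n * n + n + n))%nat by lia.
  rewrite Cpow_S, !Cpow_add_r. ring.
Qed.

Lemma tt_tele (q w : C) (n : nat) : (Cmod q < 1)%R -> (Cmod w < 1)%R ->
  (1 + w * q) * tt q w n - (1 - w * q) * tt q (w * q) n = WW q w n - WW q w (S n).
Proof.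
  intros Hq Hw.
  assert (Hq0 : (0 <= Cmod q)%R) by apply Cmod_ge_0.
  assert (Hw0 : (0 <= Cmod w)%R) by apply Cmod_ge_0.
  assert (Hu : (Cmod (q ^ n) <= 1)%R) by (apply Cmod_pow_lt1; exact Hq).
  assert (Hu0 : (0 <= Cmod (q ^ n))%R) by apply Cmod_ge_0.
  assert (N1 : 1 - w <> 0) by (apply one_sub_nz; exact Hw).
  assert (N2 : 1 - w * q <> 0) by (apply one_sub_nz; rewrite Cmod_mult; nra).
  assert (N3 : 1 + w * q <> 0) by (apply one_add_nz; rewrite Cmod_mult; nra).
  assert (N4 : 1 - q * q ^ n <> 0) by (apply one_sub_nz; rewrite Cmod_mult; nra).
  assert (N5 : 1 + w * q * q ^ n <> 0).
  { apply one_add_nz. rewrite !Cmod_mult. assert (Hwq : (Cmod w * Cmod q < 1)%R) by nra. apply Rle_lt_trans with (Cmod w * Cmod q * 1)%R; [apply Rmult_le_compat_l; [apply Rmult_le_pos; assumption | exact Hu] | lra]. }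
  assert (N6 : qpoch q q n <> 0) by (apply qpoch_nz; lra).
  assert (N7 : qpoch (- w * q) q n <> 0) by (apply qpoch_nz; [lra | rewrite Cmod_mult, Cmod_opp; nra]).
  assert (E1 : qpoch (w * q) q n = qpoch w q n * (1 - w * q ^ n) / (1 - w)).
  { pose proof (qpoch_shift w q n) as H. rewrite qpoch_S in H. rewrite H. field. exact N1. }
  assert (E2 : qpoch (- (w * q) * q) q n = qpoch (- w * q) q n * (1 - (- w * q) * q ^ n) / (1 - (- w * q))).
  { pose proof (qpoch_shift (- w * q) q n) as H. rewrite qpoch_S in H.
    replace (- (w * q) * q) with (- w * q * q) by ring. rewrite H. field.
    intro E; apply N3; replace (1 + w * q) with (1 - - w * q) by ring; exact E. }
  unfold tt, WW, coef. rewrite E1, E2. rewrite !qpoch_S.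
  rewrite Cpow_sq_S, !Cpow_2n, !Cpow_S.
  replace (- (w * q)) with (- w * q) by ring. rewrite Cpow_mult_l.
  set (A := qpoch (-1) q n). set (B := qpoch w q n). set (Q := qpoch q q n).
  set (M := qpoch (- w * q) q n). set (u := q ^ n). set (v := q ^ (n * n)). set (y := (- w) ^ n).
  assert (N8 : 1 - - w * q * u <> 0) by (replace (1 - - w * q * u) with (1 + w * q * u) by ring; exact N5).
  assert (N9 : 1 - - w * q <> 0) by (replace (1 - - w * q) with (1 + w * q) by ring; exact N3).
  field. repeat split; assumption.
Qed.

Lemma tt_bound (q w : C) (r : R) (n : nat) : (Cmod q < 1)%R -> (Cmod w <= r)%R -> (r < 1)%R ->
  (Cmod (tt q w n) <= (2 * CB q / (1 - r)) * Cmod w ^ n)%R.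
Proof.
  intros Hq Hw Hr.
  assert (Hw1 : (Cmod w < 1)%R) by lra.
  assert (N1 : 1 - w <> 0) by (apply one_sub_nz; exact Hw1).
  pose proof (Cmod_ge_0 w) as Hw0.
  assert (h1 : (Cmod (coef w q n) <= CB q)%R) by (apply coef_bound; lra).
  assert (h2 : (Cmod (q ^ (n * n)) <= 1)%R) by (apply Cmod_pow_lt1; exact Hq).
  assert (h3 : (Cmod (1 - w * q ^ (2 * n)) <= 2)%R).
  { eapply Rle_trans; [apply Cmod_1_sub_le|]. rewrite Cmod_mult.
    pose proof (Cmod_pow_lt1 q (2 * n) Hq). pose proof (Cmod_ge_0 (q ^ (2 * n))). nra. }
  assert (h4 : (1 - r <= Cmod (1 - w))%R) by (pose proof (Cmod_1_sub_ge w); lra).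
  unfold tt. rewrite Cmod_div by exact N1. rewrite !Cmod_mult, Cmod_pow, Cmod_opp.
  replace (2 * CB q / (1 - r) * Cmod w ^ n)%R with ((CB q * Cmod w ^ n * 1 * 2) * / (1 - r))%R by (field; lra).
  unfold Rdiv. pose proof (CB_pos q). assert (0 <= Cmod w ^ n)%R by (apply pow_le; lra).
  apply Rmult_le_compat.
  - repeat apply Rmult_le_pos; apply Cmod_ge_0 || (apply pow_le; lra).
  - left. apply Rinv_0_lt_compat. apply Cmod_gt_0. exact N1.
  - apply Rmult_le_compat; try (repeat apply Rmult_le_pos); try apply Cmod_ge_0; try (apply pow_le; lra); try lra.
    apply Rmult_le_compat; try (repeat apply Rmult_le_pos); try apply Cmod_ge_0; try (apply pow_le; lra); try lra.
    apply Rmult_le_compat; try apply Cmod_ge_0; try (apply pow_le; lra); lra.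
  - apply Rinv_le_contravar; lra.
Qed.

Lemma WW_bound (q w : C) (r : R) (n : nat) : (Cmod q < 1)%R -> (Cmod w <= r)%R -> (r < 1)%R ->
  (Cmod (WW q w n) <= (4 * CB q / (1 - r)) * Cmod w ^ n)%R.
Proof.
  intros Hq Hw Hr.
  assert (Hw1 : (Cmod w < 1)%R) by lra.
  assert (N1 : 1 - w <> 0) by (apply one_sub_nz; exact Hw1).
  pose proof (Cmod_ge_0 w) as Hw0. pose proof (Cmod_ge_0 q) as Hq0.
  assert (h1 : (Cmod (coef w q n) <= CB q)%R) by (apply coef_bound; lra).
  assert (h2 : (Cmod (q ^ (n * n)) <= 1)%R) by (apply Cmod_pow_lt1; exact Hq).
  assert (h3 : (Cmod (1 - q ^ n) <= 2)%R).
  { eapply Rle_trans; [apply Cmod_1_sub_le|]. pose proof (Cmod_pow_lt1 q n Hq). lra. }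
  assert (h3' : (Cmod (1 + w * q) <= 2)%R).
  { eapply Rle_trans; [apply Cmod_triangle|]. rewrite Cmod_1, Cmod_mult. nra. }
  assert (h4 : (1 - r <= Cmod (1 - w))%R) by (pose proof (Cmod_1_sub_ge w); lra).
  unfold WW. rewrite Cmod_div by exact N1. rewrite !Cmod_mult, Cmod_pow, Cmod_opp.
  replace (4 * CB q / (1 - r) * Cmod w ^ n)%R with ((2 * 2 * CB q * Cmod w ^ n * 1) * / (1 - r))%R by (field; lra).
  unfold Rdiv. pose proof (CB_pos q). assert (0 <= Cmod w ^ n)%R by (apply pow_le; lra).
  apply Rmult_le_compat.
  - repeat apply Rmult_le_pos; apply Cmod_ge_0 || (apply pow_le; lra).
  - left. apply Rinv_0_lt_compat. apply Cmod_gt_0. exact N1.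
  - apply Rmult_le_compat; try (repeat apply Rmult_le_pos); try apply Cmod_ge_0; try (apply pow_le; lra); try lra.
    apply Rmult_le_compat; try (repeat apply Rmult_le_pos); try apply Cmod_ge_0; try (apply pow_le; lra); try lra.
    apply Rmult_le_compat; try (repeat apply Rmult_le_pos); try apply Cmod_ge_0; try (apply pow_le; lra); try lra.
    apply Rmult_le_compat; try apply Cmod_ge_0; try (apply pow_le; lra); lra.
  - apply Rinv_le_contravar; lra.
Qed.

Lemma F_ex (q w : C) : (Cmod q < 1)%R -> (Cmod w < 1)%R -> exists F, is_series (tt q w) F.
Proof.
  intros Hq Hw. apply series_ex_geom with (B := (2 * CB q / (1 - Cmod w))%R) (r := Cmod w).
  - split; [apply Cmod_ge_0 | exact Hw].
  - intros n. apply tt_bound; lra.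
Qed.

Lemma lim_comb (X Y : nat -> R) (a b : R) : is_lim_seq X 0%R -> is_lim_seq Y 0%R ->
  is_lim_seq (fun n => (a * X n + b * Y n)%R) 0%R.
Proof.
  intros HX HY. replace 0%R with (a * 0 + b * 0)%R by ring.
  apply is_lim_seq_plus'; apply is_lim_seq_mult'; try apply is_lim_seq_const; assumption.
Qed.

Lemma F_fe (q w F1 F2 : C) : (Cmod q < 1)%R -> (Cmod w < 1)%R ->
  is_series (tt q w) F1 -> is_series (tt q (w * q)) F2 ->
  (1 + w * q) * F1 = (1 - w * q) * F2.
Proof.
  intros Hq Hw H1 H2.
  set (D := fun n => (1 + w * q) * tt q w n - (1 - w * q) * tt q (w * q) n).
  assert (HS : forall N, @eq C (sum_n D N) ((1 + w * q) * sum_n (tt q w) N - (1 - w * q) * sum_n (tt q (w * q)) N)).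
  { induction N as [|N IH].
    - rewrite !sumC_O. reflexivity.
    - rewrite !sumC_S, IH. unfold D. ring. }
  assert (HT : forall N, @eq C (sum_n D N) (- WW q w (S N))).
  { induction N as [|N IH].
    - rewrite sumC_O. unfold D. rewrite tt_tele by assumption.
      assert (W0 : WW q w 0 = 0). { unfold WW. replace (q ^ 0) with (RtoC 1) by reflexivity. unfold Cdiv. ring. }
      rewrite W0. ring.
    - rewrite sumC_S, IH. unfold D. rewrite tt_tele by assumption. ring. }
  assert (L1 : filterlim (sum_n D) eventually (locally ((1 + w * q) * F1 - (1 - w * q) * F2))).
  { apply limC_sq with (b := fun N => (Cmod (1 + w * q) * Cmod (sum_n (tt q w) N - F1)
                                       + Cmod (1 - w * q) * Cmod (sum_n (tt q (w * q)) N - F2))%R).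
    - intros N. rewrite HS.
      replace ((1 + w * q) * sum_n (tt q w) N - (1 - w * q) * sum_n (tt q (w * q)) N -
               ((1 + w * q) * F1 - (1 - w * q) * F2))
        with ((1 + w * q) * (sum_n (tt q w) N - F1) - (1 - w * q) * (sum_n (tt q (w * q)) N - F2)) by ring.
      eapply Rle_trans; [apply Cmod_sub_le|]. rewrite !Cmod_mult. lra.
    - apply lim_comb; apply limC_iff; assumption. }
  assert (L2 : filterlim (sum_n D) eventually (locally (RtoC 0))).
  { apply limC_sq with (b := fun N => ((4 * CB q / (1 - Cmod w) * Cmod w) * Cmod w ^ N)%R).
    - intros N. rewrite HT. replace (- WW q w (S N) - 0) with (- WW q w (S N)) by ring.
      rewrite Cmod_opp. eapply Rle_trans; [apply WW_bound with (r := Cmod w); lra|].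
      simpl. lra.
    - apply lim_geom. split; [apply Cmod_ge_0 | exact Hw]. }
  pose proof (limC_unique _ _ _ L1 L2) as E.
  replace ((1 + w * q) * F1) with (((1 + w * q) * F1 - (1 - w * q) * F2) + (1 - w * q) * F2) by ring.
  rewrite E. ring.
Qed.

Lemma tt_0 (q w : C) : (Cmod w < 1)%R -> tt q w 0 = 1.
Proof.
  intros Hw. assert (N1 : 1 - w <> 0) by (apply one_sub_nz; exact Hw).
  unfold tt, coef. cbn [qpoch Cpow Nat.mul Nat.add]. field. exact N1.
Qed.

Lemma F_near1 (q w F : C) (r : R) : (Cmod q < 1)%R -> (Cmod w <= r)%R -> (r < 1)%R ->
  is_series (tt q w) F -> (Cmod (F - 1) <= (2 * CB q / (1 - r)) * Cmod w / (1 - r))%R.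
Proof.
  intros Hq Hw Hr HF.
  pose proof (Cmod_ge_0 w) as Hw0. pose proof (CB_pos q) as HCB.
  assert (HB : (0 <= 2 * CB q / (1 - r))%R) by (apply Rdiv_le_0_compat; lra).
  pose proof (series_bound (tt q w) F (2 * CB q / (1 - r)) (Cmod w) ltac:(lra) HB HF) as H.
  rewrite tt_0 in H by lra.
  eapply Rle_trans; [apply H|].
  - intros n. apply tt_bound; lra.
  - unfold Rdiv. apply Rmult_le_compat_l; [apply Rmult_le_pos; [|apply Cmod_ge_0]; lra|].
    apply Rinv_le_contravar; lra.
Qed.

Lemma Cmod_zqk (z q : C) (k : nat) : (Cmod q < 1)%R -> (Cmod (z * q ^ k) <= Cmod z)%R.
Proof.
  intros Hq. rewrite Cmod_mult. pose proof (Cmod_pow_lt1 q k Hq). pose proof (Cmod_ge_0 z).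
  pose proof (Cmod_ge_0 (q ^ k)). nra.
Qed.

Lemma F_iter (q z F0 : C) : (Cmod q < 1)%R -> (Cmod z < 1)%R -> is_series (tt q z) F0 ->
  forall k Fk, is_series (tt q (z * q ^ k)) Fk ->
    F0 * qpoch (- z * q) q k = Fk * qpoch (z * q) q k.
Proof.
  intros Hq Hz H0. induction k as [|k IH]; intros Fk Hk.
  - simpl in Hk. replace (z * 1) with z in Hk by ring.
    assert (F0 = Fk) by (apply (limC_unique (sum_n (tt q z))); assumption).
    subst. reflexivity.
  - assert (Hzk : (Cmod (z * q ^ k) < 1)%R) by (pose proof (Cmod_zqk z q k Hq); lra).
    destruct (F_ex q (z * q ^ k) Hq Hzk) as [Fk' HFk'].
    specialize (IH Fk' HFk').
    rewrite Cpow_S in Hk. replace (z * (q * q ^ k)) with (z * q ^ k * q) in Hk by ring.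
    pose proof (F_fe q (z * q ^ k) Fk' Fk Hq Hzk HFk' Hk) as E.
    rewrite !qpoch_S.
    transitivity ((F0 * qpoch (- z * q) q k) * (1 + z * q ^ k * q)); [ring|].
    rewrite IH.
    transitivity (qpoch (z * q) q k * ((1 + z * q ^ k * q) * Fk')); [ring|].
    rewrite E. ring.
Qed.

Lemma main_f (q z Pp Pm F0 : C) : (Cmod q < 1)%R -> (Cmod z < 1)%R ->
  is_qpoch_inf (z * q) q Pp -> is_qpoch_inf (- z * q) q Pm -> is_series (tt q z) F0 ->
  F0 * Pm = Pp.
Proof.
  intros Hq Hz Hp Hm H0.
  unfold is_qpoch_inf in Hp, Hm. apply limC_iff in Hp. apply limC_iff in Hm.
  pose proof (Cmod_ge_0 q) as Hq0. pose proof (Cmod_ge_0 z) as Hz0. pose proof (CB_pos q) as HCB.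
  set (c1 := (2 * CB q / (1 - Cmod z) / (1 - Cmod z) * Cmod z * Ku q)%R).
  assert (Hb : forall k, (Cmod (F0 * Pm - Pp) <=
     Cmod F0 * Cmod (qpoch (- z * q) q k - Pm) + c1 * Cmod q ^ k + Cmod (qpoch (z * q) q k - Pp))%R).
  { intros k.
    assert (Hzk : (Cmod (z * q ^ k) < 1)%R) by (pose proof (Cmod_zqk z q k Hq); lra).
    destruct (F_ex q (z * q ^ k) Hq Hzk) as [Fk HFk].
    pose proof (F_iter q z F0 Hq Hz H0 k Fk HFk) as E.
    pose proof (F_near1 q (z * q ^ k) Fk (Cmod z) Hq (Cmod_zqk z q k Hq) Hz HFk) as Hn.
    assert (Hpk : (Cmod (qpoch (z * q) q k) <= Ku q)%R).
    { apply qpoch_upK; [exact Hq|]. rewrite Cmod_mult. nra. }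
    assert (EE : F0 * Pm - Pp = (- (F0 * (qpoch (- z * q) q k - Pm)) + (Fk - 1) * qpoch (z * q) q k
                                 + (qpoch (z * q) q k - Pp))).
    { ring_simplify. rewrite <- E. ring. }
    replace (F0 * Pm - Pp) with (- (F0 * (qpoch (- z * q) q k - Pm)) + (Fk - 1) * qpoch (z * q) q k
                                 + (qpoch (z * q) q k - Pp))
      by (symmetry; exact EE).
    eapply Rle_trans; [apply Cmod_triangle|].
    eapply Rle_trans; [apply Rplus_le_compat_r; apply Cmod_triangle|].
    rewrite Cmod_opp, !Cmod_mult.
    apply Rplus_le_compat_r. apply Rplus_le_compat_l.
    rewrite Cmod_mult, Cmod_pow in Hn.
    unfold c1.
    assert (0 <= Cmod (qpoch (z * q) q k))%R by apply Cmod_ge_0.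
    assert (0 <= Cmod (Fk - 1))%R by apply Cmod_ge_0.
    replace (2 * CB q / (1 - Cmod z) / (1 - Cmod z) * Cmod z * Ku q * Cmod q ^ k)%R
      with ((2 * CB q / (1 - Cmod z) * (Cmod z * Cmod q ^ k) / (1 - Cmod z)) * Ku q)%R by (field; lra).
    apply Rmult_le_compat; assumption. }
  assert (HL : is_lim_seq (fun k => (Cmod F0 * Cmod (qpoch (- z * q) q k - Pm) + c1 * Cmod q ^ k
                                     + Cmod (qpoch (z * q) q k - Pp))%R) (Cmod F0 * 0 + 0 + 0)%R).
  { apply is_lim_seq_plus'; [apply is_lim_seq_plus'|].
    - apply is_lim_seq_mult'; [apply is_lim_seq_const | exact Hm].
    - apply lim_geom. lra.
    - exact Hp. }
  assert (HR : Rbar_le (Cmod (F0 * Pm - Pp)) (Cmod F0 * 0 + 0 + 0)%R).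
  { apply is_lim_seq_le with (u := fun _ => Cmod (F0 * Pm - Pp)) (v := fun k => (Cmod F0 * Cmod (qpoch (- z * q) q k - Pm) + c1 * Cmod q ^ k
                                     + Cmod (qpoch (z * q) q k - Pp))%R).
    - exact Hb.
    - apply is_lim_seq_const.
    - exact HL. }
  simpl in HR. assert (Cmod (F0 * Pm - Pp) = 0%R) by (pose proof (Cmod_ge_0 (F0 * Pm - Pp)); lra).
  apply Cmod_eq_0 in H. replace (F0 * Pm) with ((F0 * Pm - Pp) + Pp) by ring. rewrite H. ring.
Qed.

Lemma eq_of_bound (a b : C) (e : nat -> R) : (forall N, (Cmod (a - b) <= e N)%R) ->
  is_lim_seq e 0%R -> a = b.
Proof.
  intros Hb He.
  assert (HR : Rbar_le (Cmod (a - b)) 0%R).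
  { apply is_lim_seq_le with (u := fun _ => Cmod (a - b)) (v := e); [exact Hb | apply is_lim_seq_const | exact He]. }
  simpl in HR. assert (Cmod (a - b) = 0%R) by (pose proof (Cmod_ge_0 (a - b)); lra).
  apply Cmod_eq_0 in H. replace a with ((a - b) + b) by ring. rewrite H. ring.
Qed.

Lemma qpoch_inf_ex (x q : C) : (Cmod q < 1)%R -> (Cmod x <= 1)%R -> exists P, is_qpoch_inf x q P.
Proof.
  intros Hq Hx.
  set (a := fun n => qpoch x q (S n) - qpoch x q n).
  assert (Ha : forall n, (Cmod (a n) <= Ku q * Cmod q ^ n)%R).
  { intros n. unfold a. rewrite qpoch_S.
    replace (qpoch x q n * (1 - x * q ^ n) - qpoch x q n) with (- (qpoch x q n * (x * q ^ n))) by ring.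
    rewrite Cmod_opp, !Cmod_mult, Cmod_pow.
    pose proof (qpoch_upK x q n Hq Hx). pose proof (Cmod_ge_0 (qpoch x q n)).
    pose proof (Cmod_ge_0 x). assert (0 <= Cmod q ^ n)%R by (apply pow_le; apply Cmod_ge_0).
    assert (Cmod x * Cmod q ^ n <= Cmod q ^ n)%R by nra.
    apply Rmult_le_compat; try assumption. apply Rmult_le_pos; assumption. }
  destruct (series_ex_geom a (Ku q) (Cmod q) ltac:(split; [apply Cmod_ge_0 | exact Hq]) Ha) as [L HL].
  assert (HS : forall N, @eq C (sum_n a N) (qpoch x q (S N) - 1)).
  { induction N as [|N IH].
    - rewrite sumC_O. unfold a. reflexivity.
    - rewrite sumC_S, IH. unfold a. ring. }
  exists (L + 1). unfold is_qpoch_inf. apply limC_iff. apply is_lim_seq_incr_1.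
  apply limC_iff in HL.
  eapply is_lim_seq_ext; [| exact HL]. intros N. cbv beta. rewrite HS. f_equal. ring.
Qed.

Lemma lim_lower (u : nat -> C) (l : C) (K : R) :
  filterlim u eventually (locally l) -> (forall n, (K <= Cmod (u n))%R) -> (K <= Cmod l)%R.
Proof.
  intros Hl Hb. apply limC_iff in Hl.
  assert (H : Rbar_le (K - 0)%R (Cmod l)).
  { apply is_lim_seq_le with (u := fun n => (K - Cmod (u n - l))%R) (v := fun _ => Cmod l).
    - intros n. specialize (Hb n).
      assert (Cmod (u n) <= Cmod l + Cmod (u n - l))%R.
      { replace (u n) with (l + (u n - l)) at 1 by ring. apply Cmod_triangle. }
      lra.
    - apply is_lim_seq_minus'; [apply is_lim_seq_const | exact Hl].
    - apply is_lim_seq_const. }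
  simpl in H. lra.
Qed.

Lemma Pm_nz (x q P : C) : (Cmod q < 1)%R -> (Cmod x <= Cmod q)%R -> is_qpoch_inf x q P -> P <> 0.
Proof.
  intros Hq Hx HP. apply Cmod_gt_0. eapply Rlt_le_trans; [apply (Kl_pos q)|].
  apply lim_lower with (u := qpoch x q); [exact HP|]. intros n. apply qpoch_lowK; assumption.
Qed.

Lemma div_lemma (m : nat) : Nat.div (S m * (S m - 1)) 2 = (Nat.div (m * (m - 1)) 2 + m)%nat.
Proof.
  destruct m as [|k]; [reflexivity|].
  replace (S (S k) - 1)%nat with (S k) by lia. replace (S k - 1)%nat with k by lia.
  replace (S (S k) * S k)%nat with (S k * k + S k * 2)%nat by lia.
  rewrite Nat.div_add by lia. reflexivity.
Qed.

Lemma ptheta_shift (x Q : C) (m : nat) : ptheta_term x Q (S m) = - x * ptheta_term (x * Q) Q m.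
Proof.
  unfold ptheta_term. rewrite div_lemma. rewrite Cpow_add_r, Cpow_mult_l, !Cpow_S. ring.
Qed.

Lemma Cmod_m1' : Cmod (RtoC (-1)) = 1%R.
Proof. rewrite Cmod_R. unfold Rabs. destruct (Rcase_abs (-1)); lra. Qed.

Lemma ptheta_0 (x Q : C) : ptheta_term x Q 0 = 1.
Proof.
  unfold ptheta_term. replace (Nat.div (0 * (0 - 1)) 2) with 0%nat by reflexivity. cbn [Cpow]. ring.
Qed.

Lemma ptheta_bound (x Q : C) (m : nat) : (Cmod Q <= 1)%R ->
  (Cmod (ptheta_term x Q m) <= 1 * Cmod x ^ m)%R.
Proof.
  intros HQ. unfold ptheta_term. rewrite !Cmod_mult, !Cmod_pow, Cmod_m1', pow1.
  pose proof (pow_le1 (Cmod Q) (Nat.div (m * (m - 1)) 2) ltac:(split; [apply Cmod_ge_0 | exact HQ])).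
  assert (0 <= Cmod Q ^ Nat.div (m * (m - 1)) 2)%R by (apply pow_le; apply Cmod_ge_0).
  assert (0 <= Cmod x ^ m)%R by (apply pow_le; apply Cmod_ge_0).
  nra.
Qed.

Lemma theta_ex (x Q : C) : (Cmod x < 1)%R -> (Cmod Q <= 1)%R -> exists T, is_series (ptheta_term x Q) T.
Proof.
  intros Hx HQ. apply series_ex_geom with (B := 1%R) (r := Cmod x).
  - split; [apply Cmod_ge_0 | exact Hx].
  - intros n. apply ptheta_bound. exact HQ.
Qed.

Lemma theta_bound (x Q T : C) (r : R) : (Cmod x <= r)%R -> (r < 1)%R -> (Cmod Q <= 1)%R ->
  is_series (ptheta_term x Q) T -> (Cmod T <= 1 + r / (1 - r))%R.
Proof.
  intros Hx Hr HQ HT. pose proof (Cmod_ge_0 x).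
  pose proof (series_bound (ptheta_term x Q) T 1 (Cmod x) ltac:(lra) ltac:(lra) HT
     (fun n => ptheta_bound x Q (S n) HQ)) as H1.
  rewrite ptheta_0 in H1.
  assert (Cmod T <= Cmod (T - 1) + 1)%R.
  { replace T with ((T - 1) + 1) at 1 by ring. eapply Rle_trans; [apply Cmod_triangle|]. rewrite Cmod_1. lra. }
  assert (1 * Cmod x / (1 - Cmod x) <= r / (1 - r))%R.
  { unfold Rdiv. rewrite Rmult_1_l. apply Rmult_le_compat; try lra.
    - left; apply Rinv_0_lt_compat; lra.
    - apply Rinv_le_contravar; lra. }
  lra.
Qed.

Lemma theta_rec (x Q T1 T2 : C) : is_series (ptheta_term x Q) T1 ->
  is_series (ptheta_term (x * Q) Q) T2 -> T1 = 1 - x * T2.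
Proof.
  intros H1 H2.
  assert (HS : forall N, @eq C (sum_n (ptheta_term x Q) (S N)) (1 - x * sum_n (ptheta_term (x * Q) Q) N)).
  { induction N as [|N IH].
    - rewrite sumC_S, !sumC_O, ptheta_shift, ptheta_0. ring.
    - rewrite sumC_S, IH, sumC_S, ptheta_shift. ring. }
  apply limC_iff in H1. apply limC_iff in H2. apply is_lim_seq_incr_1 in H1.
  apply eq_of_bound with (e := fun N => (1 * Cmod (sum_n (ptheta_term x Q) (S N) - T1)
                                         + Cmod x * Cmod (sum_n (ptheta_term (x * Q) Q) N - T2))%R).
  - intros N.
    replace (T1 - (1 - x * T2)) with (- (sum_n (ptheta_term x Q) (S N) - T1) + (sum_n (ptheta_term x Q) (S N) - (1 - x * T2))) by ring.
    rewrite HS.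
    replace (1 - x * sum_n (ptheta_term (x * Q) Q) N - (1 - x * T2)) with (- (x * (sum_n (ptheta_term (x * Q) Q) N - T2))) by ring.
    eapply Rle_trans; [apply Cmod_triangle|]. rewrite !Cmod_opp, Cmod_mult. lra.
  - apply lim_comb; assumption.
Qed.

Definition ee (q z : C) (N : nat) : C := (1 - z * q ^ (2 * N)) / (1 - z) + q ^ N.
Definition GG (q z : C) (N : nat) : C := - z * (- z) ^ (S N) * q ^ (S N * S N) * coef z q N * ee q z N.
Definition Ss (q z : C) (n : nat) : C := coef z q n * (- z) ^ n * q ^ (n * n + n).

Lemma Cpow_2n1 (q : C) (n : nat) : q ^ (2 * n + 1) = q ^ n * q ^ n * q.
Proof. rewrite Cpow_add_r, Cpow_2n, Cpow_1_r. reflexivity. Qed.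

Lemma HT_lemma (q z : C) (Th : nat -> C) : (Cmod q < 1)%R -> (Cmod z < 1)%R ->
  (forall n, Th n = 1 - z ^ 2 * q ^ (2 * n + 1) * Th (S n)) ->
  forall N, @eq C (sum_n (fun n : nat => coef z q n * (1 + q ^ n + z * q ^ n - z * q ^ (2 * n))
                      * (- z) ^ n * q ^ (n * n) * Th n) N)
    (sum_n (tt q z) N + sum_n (Ss q z) N - GG q z N * Th (S N)).
Proof.
  intros Hq Hz Hrec.
  pose proof (Cmod_ge_0 q) as Hq0. pose proof (Cmod_ge_0 z) as Hz0.
  assert (N1 : 1 - z <> 0) by (apply one_sub_nz; exact Hz).
  induction N as [|N IH].
  - rewrite !sumC_O. rewrite (Hrec 0%nat). rewrite tt_0 by exact Hz.
    unfold Ss, GG, ee, coef. cbn [qpoch Cpow Nat.mul Nat.add]. field. exact N1.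
  - rewrite !sumC_S, IH. rewrite (Hrec (S N)).
    assert (Hu : (Cmod (q ^ N) <= 1)%R) by (apply Cmod_pow_lt1; exact Hq).
    pose proof (Cmod_ge_0 (q ^ N)) as Hu0.
    assert (N4 : 1 - q * q ^ N <> 0) by (apply one_sub_nz; rewrite Cmod_mult; nra).
    assert (N5 : 1 - - z * q * q ^ N <> 0).
    { apply one_sub_nz. rewrite !Cmod_mult, Cmod_opp.
      apply Rle_lt_trans with (Cmod z * Cmod q * 1)%R; [apply Rmult_le_compat_l; [apply Rmult_le_pos; assumption | exact Hu] | nra]. }
    assert (N6 : qpoch q q N <> 0) by (apply qpoch_nz; lra).
    assert (N7 : qpoch (- z * q) q N <> 0) by (apply qpoch_nz; [lra | rewrite Cmod_mult, Cmod_opp; nra]).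
    unfold tt, Ss, GG, ee, coef. rewrite !qpoch_S.
    rewrite !Cpow_add_r, !Cpow_sq_S, !Cpow_2n, !Cpow_S, ?Cpow_1_r.
    set (A := qpoch (-1) q N). set (B := qpoch z q N). set (Q := qpoch q q N).
    set (M := qpoch (- z * q) q N). set (u := q ^ N). set (v := q ^ (N * N)). set (y := (- z) ^ N).
    field. repeat split; assumption.
Qed.

Lemma x_shift (z q : C) (n : nat) : z ^ 2 * q ^ (2 * n + 1) * q ^ 2 = z ^ 2 * q ^ (2 * S n + 1).
Proof.
  replace (2 * S n + 1)%nat with ((2 * n + 1) + 2)%nat by lia. rewrite (Cpow_add_r q (2 * n + 1) 2). ring.
Qed.

Lemma Cmod_x (z q : C) (n : nat) : (Cmod q < 1)%R -> (Cmod (z ^ 2 * q ^ (2 * n + 1)) <= Cmod z * Cmod z)%R.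
Proof.
  intros Hq. rewrite Cmod_mult, Cmod_pow. pose proof (Cmod_pow_lt1 q (2 * n + 1) Hq).
  pose proof (Cmod_ge_0 (q ^ (2 * n + 1))). pose proof (Cmod_ge_0 z).
  replace (Cmod z ^ 2)%R with (Cmod z * Cmod z)%R by ring.
  replace (Cmod z * Cmod z)%R with (Cmod z * Cmod z * 1)%R at 2 by ring.
  apply Rmult_le_compat_l; [apply Rmult_le_pos|]; assumption.
Qed.

Lemma GG_bound (q z : C) (N : nat) : (Cmod q < 1)%R -> (Cmod z < 1)%R ->
  (Cmod (GG q z N) <= (Cmod z * Cmod z * CB q * (2 / (1 - Cmod z) + 1)) * Cmod z ^ N)%R.
Proof.
  intros Hq Hz. pose proof (Cmod_ge_0 z) as Hz0. pose proof (CB_pos q) as HCB.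
  assert (N1 : 1 - z <> 0) by (apply one_sub_nz; exact Hz).
  assert (He : (Cmod (ee q z N) <= 2 / (1 - Cmod z) + 1)%R).
  { unfold ee. eapply Rle_trans; [apply Cmod_triangle|]. apply Rplus_le_compat.
    - rewrite Cmod_div by exact N1. unfold Rdiv. apply Rmult_le_compat; try apply Cmod_ge_0.
      + left. apply Rinv_0_lt_compat. apply Cmod_gt_0. exact N1.
      + eapply Rle_trans; [apply Cmod_1_sub_le|]. rewrite Cmod_mult.
        pose proof (Cmod_pow_lt1 q (2 * N) Hq). pose proof (Cmod_ge_0 (q ^ (2 * N))). nra.
      + apply Rinv_le_contravar; [lra|]. apply Cmod_1_sub_ge.
    - apply Cmod_pow_lt1. exact Hq. }
  assert (Hc : (Cmod (coef z q N) <= CB q)%R) by (apply coef_bound; lra).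
  unfold GG. rewrite !Cmod_mult, Cmod_opp, !Cmod_pow, Cmod_opp.
  pose proof (Cmod_pow_lt1 q (S N * S N) Hq) as Hp. rewrite Cmod_pow in Hp.
  assert (0 <= Cmod z ^ N)%R by (apply pow_le; lra).
  assert (0 <= Cmod q ^ (S N * S N))%R by (apply pow_le; apply Cmod_ge_0).
  replace (Cmod z ^ S N)%R with (Cmod z * Cmod z ^ N)%R by reflexivity.
  replace (Cmod z * Cmod z * CB q * (2 / (1 - Cmod z) + 1) * Cmod z ^ N)%R
    with (Cmod z * (Cmod z * Cmod z ^ N) * 1 * CB q * (2 / (1 - Cmod z) + 1))%R by ring.
  assert (0 <= 2 / (1 - Cmod z))%R by (apply Rdiv_le_0_compat; lra).
  assert (Ha : (0 <= Cmod z * (Cmod z * Cmod z ^ N))%R) by (repeat apply Rmult_le_pos; assumption).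
  apply Rmult_le_compat; [| apply Cmod_ge_0 | | exact He].
  { apply Rmult_le_pos; [apply Rmult_le_pos; [exact Ha | exact H0] | apply Cmod_ge_0]. }
  apply Rmult_le_compat; [| apply Cmod_ge_0 | | exact Hc].
  { apply Rmult_le_pos; [exact Ha | exact H0]. }
  apply Rmult_le_compat_l; assumption.
Qed.

Lemma Ss_bound (q z : C) (n : nat) : (Cmod q < 1)%R -> (Cmod z < 1)%R ->
  (Cmod (Ss q z n) <= CB q * Cmod z ^ n)%R.
Proof.
  intros Hq Hz. unfold Ss. rewrite !Cmod_mult, Cmod_pow, Cmod_opp.
  assert (Hc : (Cmod (coef z q n) <= CB q)%R) by (apply coef_bound; lra).
  pose proof (Cmod_pow_lt1 q (n * n + n) Hq).
  assert (0 <= Cmod z ^ n)%R by (apply pow_le; apply Cmod_ge_0).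
  pose proof (Cmod_ge_0 (q ^ (n * n + n))). pose proof (Cmod_ge_0 (coef z q n)).
  replace (CB q * Cmod z ^ n)%R with (CB q * Cmod z ^ n * 1)%R by ring.
  apply Rmult_le_compat; try (repeat apply Rmult_le_pos); try assumption.
  apply Rmult_le_compat; try assumption. lra.
Qed.

Theorem corollary3p3 (q z : C) :
  (Cmod q < 1)%R -> (Cmod z < 1)%R ->
  (forall j : nat, (1 <= j)%nat -> - z * q ^ j <> 1) ->
  exists (Pp Pm S : C) (Th : nat -> C),
    is_qpoch_inf (z * q) q Pp /\
    is_qpoch_inf (- z * q) q Pm /\
    (forall n : nat, is_ptheta (z ^ 2 * q ^ (2 * n + 1)) (q ^ 2) (Th n)) /\
    is_series (fun n : nat => coef z q n * (- z) ^ n * q ^ (n * n + n)) S /\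
    is_series
      (fun n : nat => coef z q n * (1 + q ^ n + z * q ^ n - z * q ^ (2 * n))
                      * (- z) ^ n * q ^ (n * n) * Th n)
      (Pp / Pm + S).
Proof.
  intros Hq Hz _.
  pose proof (Cmod_ge_0 q) as Hq0. pose proof (Cmod_ge_0 z) as Hz0.
  assert (Hzq : (Cmod (z * q) <= 1)%R) by (rewrite Cmod_mult; nra).
  assert (Hmzq : (Cmod (- z * q) <= Cmod q)%R) by (rewrite Cmod_mult, Cmod_opp; nra).
  destruct (qpoch_inf_ex (z * q) q Hq Hzq) as [Pp HPp].
  destruct (qpoch_inf_ex (- z * q) q Hq ltac:(lra)) as [Pm HPm].
  assert (HQ2 : (Cmod (q ^ 2) <= 1)%R) by (apply Cmod_pow_lt1; exact Hq).
  assert (Hr2 : (Cmod z * Cmod z < 1)%R) by nra.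
  assert (Hth : forall n, exists T, is_series (ptheta_term (z ^ 2 * q ^ (2 * n + 1)) (q ^ 2)) T).
  { intros n. apply theta_ex; [| exact HQ2]. pose proof (Cmod_x z q n Hq). lra. }
  set (Th := fun n => proj1_sig (constructive_indefinite_description _ (Hth n))).
  assert (HTh : forall n, is_series (ptheta_term (z ^ 2 * q ^ (2 * n + 1)) (q ^ 2)) (Th n)).
  { intros n. unfold Th. apply (proj2_sig (constructive_indefinite_description _ (Hth n))). }
  destruct (series_ex_geom (Ss q z) (CB q) (Cmod z) ltac:(lra) (fun n => Ss_bound q z n Hq Hz)) as [Sv HS].
  exists Pp, Pm, Sv, Th.
  split; [exact HPp|]. split; [exact HPm|]. split; [exact HTh|]. split; [exact HS|].
  destruct (F_ex q z Hq Hz) as [F0 HF0].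
  pose proof (main_f q z Pp Pm F0 Hq Hz HPp HPm HF0) as E.
  pose proof (Pm_nz (- z * q) q Pm Hq Hmzq HPm) as HPm0.
  assert (EF : @eq C (Pp / Pm) F0) by (rewrite <- E; field; exact HPm0). rewrite EF.
  assert (Hrec : forall n, Th n = 1 - z ^ 2 * q ^ (2 * n + 1) * Th (S n)).
  { intros n. apply theta_rec with (Q := q ^ 2); [apply HTh|]. rewrite x_shift. apply HTh. }
  assert (HBT : forall n, (Cmod (Th n) <= 1 + Cmod z * Cmod z / (1 - Cmod z * Cmod z))%R).
  { intros n. apply theta_bound with (x := z ^ 2 * q ^ (2 * n + 1)) (Q := q ^ 2);
      [apply Cmod_x; exact Hq | exact Hr2 | exact HQ2 | apply HTh]. }
  pose proof (HT_lemma q z Th Hq Hz Hrec) as HT.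
  set (BT := (1 + Cmod z * Cmod z / (1 - Cmod z * Cmod z))%R).
  set (cG := (Cmod z * Cmod z * CB q * (2 / (1 - Cmod z) + 1))%R).
  apply limC_sq with (b := fun N => (1 * Cmod (sum_n (tt q z) N - F0) + 1 * Cmod (sum_n (Ss q z) N - Sv)
                                      + (cG * BT) * Cmod z ^ N)%R).
  - intros N. rewrite HT.
    replace (sum_n (tt q z) N + sum_n (Ss q z) N - GG q z N * Th (S N) - (F0 + Sv))
      with ((sum_n (tt q z) N - F0) + (sum_n (Ss q z) N - Sv) - GG q z N * Th (S N)) by ring.
    eapply Rle_trans; [apply Cmod_sub_le|].
    eapply Rle_trans; [apply Rplus_le_compat_r; apply Cmod_triangle|].
    rewrite Cmod_mult.
    pose proof (GG_bound q z N Hq Hz). pose proof (HBT (S N)).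
    assert (0 <= Cmod z ^ N)%R by (apply pow_le; lra).
    assert (Cmod (GG q z N) * Cmod (Th (S N)) <= cG * Cmod z ^ N * BT)%R.
    { apply Rmult_le_compat; try apply Cmod_ge_0; assumption. }
    lra.
  - apply limC_iff in HF0. apply limC_iff in HS.
    replace 0%R with (0 + 0)%R by ring. apply is_lim_seq_plus'.
    + apply lim_comb; assumption.
    + apply lim_geom. lra.
Qed.
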